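(* Let $A$ be an $n\times n$ array with exactly $\beta n^2$ distinct symbols. If row $i$ of $A$ contains $d\ge 1$ cells whose symbols are clones, then there is a cell $(i,j)$ in row $i$ whose symbol $A_{ij}$ is a clone and such that $$|R_i(A)\cup C_j(A)|\ \ge\ |R_i(A)|+\frac{\beta n^2-(n-d)(n-1)-|R_i(A)|}{d}.$$
   Context: An $n\times n$ array has a symbol in each cell (symbols may repeat arbitrarily). A symbol is a singleton if it occurs exactly once in the array and a clone otherwise; we say $A_{ij}$ is a clone (singleton) if the symbol in cell $(i,j)$ is a clone (singleton). $R_i(A)$ and $C_j(A)$ denote the sets of symbols occurring in row $i$ and column $j$ of $A$, respectively. *)

(* Defs.v *)
From HB Require Import structures.
From mathcomp Require Import all_boot all_order all_algebra.
Set Implicit Arguments. Unset Strict Implicit. Unset Printing Implicit Defensive.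

Definition array (T : Type) (n : nat) := 'I_n -> 'I_n -> T.

Section ArrayDefs.
Variables (T : finType) (n : nat) (A : array T n).

Definition symbols : {set T} := [set A ij.1 ij.2 | ij : 'I_n * 'I_n].

Definition occurrences (s : T) : nat :=
  #|[set ij : 'I_n * 'I_n | A ij.1 ij.2 == s]|.

Definition is_clone (s : T) : bool := 1 < occurrences s.
Definition is_singleton (s : T) : bool := occurrences s == 1.

Definition row_syms (i : 'I_n) : {set T} := [set A i j | j : 'I_n].
Definition col_syms (j : 'I_n) : {set T} := [set A k j | k : 'I_n].

Definition row_clone_count (i : 'I_n) : nat := #|[set j : 'I_n | is_clone (A i j)]|.
End ArrayDefs.

(* Main.v *)
Require Import Defs.
From HB Require Import structures.
From mathcomp Require Import all_boot all_order all_algebra.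
From mathcomp Require Import lra.
Import Order.TTheory GRing.Theory Num.Theory.
Local Open Scope ring_scope.

Lemma card_bigcup_leq (T I : finType) (P : pred I) (F : I -> {set T}) :
  (#|\bigcup_(j | P j) F j| <= \sum_(j | P j) #|F j|)%N.
Proof.
elim/big_ind2: _ => //.
- by rewrite cards0.
- move=> x1 x2 y1 y2 h1 h2; rewrite cardsU.
  apply: leq_trans (leq_subr _ _) _; exact: leq_add.
Qed.

Lemma key_nat (T : finType) (n : nat) (A : array T n) (i : 'I_n) :
  let D := [set j | is_clone A (A i j)] in
  let f := fun j => #|col_syms A j :\: row_syms A i| in
  forall jm, (forall j, j \in D -> f j <= f jm)%N ->
  (#|symbols A| <= #|row_syms A i| + (n - #|D|) * n.-1 + #|D| * f jm)%N.
Proof.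
move=> D f jm Hm.
set S := symbols A; set R := row_syms A i.
set X := [set A kj.1 kj.2 | kj in setX [set~ i] (~: D)].
set Y := \bigcup_(j in D) (col_syms A j :\: R).
have sub : S \subset R :|: (X :|: Y).
  apply/subsetP => s /imsetP [[k j] _ ->] /=.
  case: (eqVneq k i) => [->|ki].
    by rewrite !inE; apply/orP; left; apply/imsetP; exists j.
  case: (boolP (A k j \in R)) => hR; first by rewrite inE hR.
  case: (boolP (j \in D)) => hD.
    rewrite !inE; apply/orP; right; apply/orP; right.
    apply/bigcupP; exists j => //; rewrite inE hR /=.
    by apply/imsetP; exists k.
  rewrite !inE; apply/orP; right; apply/orP; left.
  by apply/imsetP; exists (k, j) => //; rewrite !inE /= ki /=; move: hD; rewrite inE.
have h1 := subset_leq_card sub.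
have hX : (#|X| <= (n - #|D|) * n.-1)%N.
  apply: leq_trans (leq_imset_card _ _) _.
  rewrite cardsX cardsC1 card_ord mulnC leq_mul2r.
  apply/orP; right; have := cardsC D; rewrite card_ord => e.
  by rewrite -(addKn #|D| #|~: D|) e.
have hY : (#|Y| <= #|D| * f jm)%N.
  apply: leq_trans; first exact: card_bigcup_leq.
  rewrite -sum_nat_const; apply: leq_sum => j jD; exact: Hm.
apply: leq_trans h1 _.
rewrite -addnA; apply: leq_trans (leq_card_setU _ _) _.
rewrite leq_add2l; apply: leq_trans (leq_card_setU _ _) _.
exact: leq_add.
Qed.

Theorem mainTheorem4 (T : finType) (n : nat) (A : array T n) (beta : rat)
    (i : 'I_n) (d : nat) :
  #|symbols A|%:R = beta * (n%:R ^+ 2) ->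
  row_clone_count A i = d ->
  (1 <= d)%N ->
  exists j : 'I_n, is_clone A (A i j) /\
    (#|row_syms A i|%:R
       + (beta * n%:R ^+ 2 - (n%:R - d%:R) * (n%:R - 1) - #|row_syms A i|%:R) / d%:R
     <= #|row_syms A i :|: col_syms A j|%:R :> rat).
Proof.
move=> hS hd d1.
set D := [set j | is_clone A (A i j)].
set f := fun j => #|col_syms A j :\: row_syms A i|.
have hD : #|D| = d by [].
have [j0 j0D] : exists j0, j0 \in D.
  apply/set0Pn; rewrite -card_gt0 hD; exact: d1.
pose jm := [arg max_(j > j0 in D) f j].
have [jmD Hm] : jm \in D /\ (forall j, j \in D -> f j <= f jm)%N.
  rewrite /jm; case: arg_maxnP => // k kD Hk; split => //.
have key := @key_nat T n A i jm Hm; rewrite hD in key.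
exists jm; split; first by move: jmD; rewrite inE.
have dn : (d <= n)%N by rewrite -hD -[X in (_ <= X)%N]card_ord max_card.
have n1 : (1 <= n)%N by apply: leq_trans dn.
have hU : #|row_syms A i :|: col_syms A jm| = (#|row_syms A i| + f jm)%N.
  by rewrite /f cardsU cardsD setIC addnBA // subset_leq_card // subsetIl.
rewrite hU natrD lerD2l -hS.
have dpos : 0 < d%:R :> rat by rewrite ltr0n.
rewrite ler_pdivrMr //.
rewrite -/(f jm) in key.
have := key; rewrite -(ler_nat rat) !natrD !natrM natrB // -subn1 natrB // => h.
nra.
Qed.
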